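(* For every $n\ge0$ there is a push-out diagram of sets $$\begin{array}{ccc}\mathrm{Hom}(\mathbb{Z}^n,\mathbb{Z}/2) & \longrightarrow & \mathrm{Hom}(\mathbb{Z}^n,(\mathbb{Z}/2)^2)/\Sigma_3\\ \downarrow && \downarrow\\ \ast & \longrightarrow & \pi_0\,\mathrm{Hom}(\mathbb{Z}^n,SO(3))\end{array}$$ where $\Sigma_3$ acts on $(\mathbb{Z}/2)^2$ by permuting its three non-trivial elements, the top map is induced by one of the inclusions $\mathbb{Z}/2\subset(\mathbb{Z}/2)^2$ followed by the quotient, the right map is induced by an embedding $(\mathbb{Z}/2)^2\cong\bar Q\subset SO(3)$, and the bottom map picks out the component of the trivial homomorphism.
   Context: $\mathrm{Hom}(\mathbb{Z}^n,SO(3))$ is the space of $n$-tuples of pairwise commuting elements of $SO(3)$ (subspace of $SO(3)^n$), and $\pi_0$ is its set of path components. $\bar Q\cong(\mathbb{Z}/2)^2$ is the image in $SO(3)$ of the quaternion group $Q=\{\pm1,\pm\mathbf{i},\pm\mathbf{j},\pm\mathbf{k}\}\subset SU(2)$ under the double cover $R:SU(2)\to SO(3)$ (e.g. the diagonal matrices with entries $\pm1$), and the subgroup $\mathbb{Z}/2$ is $\bar Q\cap\bar T$ for a maximal torus $\bar T$ of $SO(3)$. *)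

(* Defs.v *)
From Stdlib Require Import Reals.
From Stdlib Require Fin.
Open Scope R_scope.

Definition idx := Fin.t 3.
Definition i0 : idx := Fin.F1.
Definition i1 : idx := Fin.FS Fin.F1.
Definition i2 : idx := Fin.FS (Fin.FS Fin.F1).

Definition Mat := idx -> idx -> R.

Definition mmul (A B : Mat) : Mat :=
  fun i j => A i i0 * B i0 j + A i i1 * B i1 j + A i i2 * B i2 j.
Definition mtr (A : Mat) : Mat := fun i j => A j i.
Definition mid : Mat := fun i j => if Fin.eq_dec i j then 1 else 0.
Definition meq (A B : Mat) : Prop := forall i j, A i j = B i j.
Definition mdet (A : Mat) : R :=
    A i0 i0 * (A i1 i1 * A i2 i2 - A i1 i2 * A i2 i1)
  - A i0 i1 * (A i1 i0 * A i2 i2 - A i1 i2 * A i2 i0)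
  + A i0 i2 * (A i1 i0 * A i2 i1 - A i1 i1 * A i2 i0).

Definition in_SO3 (A : Mat) : Prop := meq (mmul (mtr A) A) mid /\ mdet A = 1.

(* Hom(Z^n, SO(3)) = n-tuples of pairwise commuting elements of SO(3) *)
Definition in_HomSO3 (n : nat) (x : Fin.t n -> Mat) : Prop :=
  (forall k, in_SO3 (x k)) /\
  (forall k l, meq (mmul (x k) (x l)) (mmul (x l) (x k))).

(* Path-connectedness inside Hom(Z^n,SO(3)) (subspace topology of R^(9n)):
   a path is a map R -> tuples, continuous in every entry, lying in
   Hom(Z^n,SO(3)) for t in [0,1], with the given endpoints. *)
Definition path_conn (n : nat) (x y : Fin.t n -> Mat) : Prop :=
  exists g : R -> Fin.t n -> Mat,
    (forall k i j, continuity (fun t => g t k i j)) /\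
    (forall t, 0 <= t <= 1 -> in_HomSO3 n (g t)) /\
    (forall k, meq (g 0 k) (x k)) /\ (forall k, meq (g 1 k) (y k)).

Definition trivHom (n : nat) : Fin.t n -> Mat := fun _ => mid.

(* Z/2 = bool (addition xorb); (Z/2)^2 = bool * bool.
   Hom(Z^n, A) for A = Z/2, (Z/2)^2 is identified with A^n (images of the
   standard generators). *)
Definition V := (bool * bool)%type.
Definition V0 : V := (false, false).

(* Sigma_3: permutations of (Z/2)^2 fixing 0, i.e. permutations of its three
   non-trivial elements (injective = bijective on a finite set). *)
Definition in_Sigma3 (s : V -> V) : Prop :=
  (forall v w, s v = s w -> v = w) /\ s V0 = V0.

Definition sigma_orbit (n : nat) (b b' : Fin.t n -> V) : Prop :=
  exists s, in_Sigma3 s /\ forall k, b' k = s (b k).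

Definition incl (a : bool) : V := (a, false).

Definition sgn (b : bool) : R := if b then -1 else 1.
Definition embQ (v : V) : Mat :=
  fun i j =>
    if Fin.eq_dec i j then
      (if Fin.eq_dec i i0 then sgn (fst v)
       else if Fin.eq_dec i i1 then sgn (snd v)
       else sgn (xorb (fst v) (snd v)))
    else 0.

Definition topMap (n : nat) (a : Fin.t n -> bool) : Fin.t n -> V :=
  fun k => incl (a k).
Definition rightMap (n : nat) (b : Fin.t n -> V) : Fin.t n -> Mat :=
  fun k => embQ (b k).

(* Main.v *)
Require Import Defs.
From Stdlib Require Import Reals Lra Psatz Classical ClassicalEpsilon FunctionalExtensionality Relations.
From Stdlib Require Fin.
Open Scope R_scope.


Lemma fin3 : forall i : Fin.t 3, i = i0 \/ i = i1 \/ i = i2.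
Proof.
  intro i.
  pattern i; apply Fin.caseS'; [left; reflexivity|].
  intro p; pattern p; apply Fin.caseS'; [right; left; reflexivity|].
  intro p'; pattern p'; apply Fin.caseS'; [right; right; reflexivity|].
  intro p''; apply (Fin.case0 (fun _ => _) p'').
Qed.

Definition fidx (i : Fin.t 3) : nat := proj1_sig (Fin.to_nat i).
Definition mk9 (a b c d e f g h k : R) : Mat :=
  fun i j => match fidx i, fidx j with
  | 0%nat,0%nat => a | 0%nat,1%nat => b | 0%nat, _ => c
  | 1%nat,0%nat => d | 1%nat,1%nat => e | 1%nat, _ => f
  | _,0%nat => g | _,1%nat => h | _, _ => k end.

Ltac fin_cases i := let H := fresh in destruct (fin3 i) as [H|[H|H]]; subst i.

Lemma meq9 (A B : Mat) :
  A i0 i0 = B i0 i0 -> A i0 i1 = B i0 i1 -> A i0 i2 = B i0 i2 ->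
  A i1 i0 = B i1 i0 -> A i1 i1 = B i1 i1 -> A i1 i2 = B i1 i2 ->
  A i2 i0 = B i2 i0 -> A i2 i1 = B i2 i1 -> A i2 i2 = B i2 i2 -> meq A B.
Proof. intros; intros i j; fin_cases i; fin_cases j; assumption. Qed.

Record quat := Q { qw : R; qx : R; qy : R; qz : R }.
Lemma quat_eq (p q : quat) : qw p = qw q -> qx p = qx q -> qy p = qy q -> qz p = qz q -> p = q.
Proof. destruct p, q; simpl; intros; subst; reflexivity. Qed.

Definition qmul (p q : quat) : quat :=
  Q (qw p * qw q - qx p * qx q - qy p * qy q - qz p * qz q)
    (qw p * qx q + qx p * qw q + qy p * qz q - qz p * qy q)
    (qw p * qy q - qx p * qz q + qy p * qw q + qz p * qx q)
    (qw p * qz q + qx p * qy q - qy p * qx q + qz p * qw q).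
Definition qconj (p : quat) : quat := Q (qw p) (- qx p) (- qy p) (- qz p).
Definition qopp (p : quat) : quat := Q (- qw p) (- qx p) (- qy p) (- qz p).
Definition qN (p : quat) : R := qw p * qw p + qx p * qx p + qy p * qy p + qz p * qz p.
Definition qone : quat := Q 1 0 0 0.

Definition Rq (q : quat) : Mat :=
  let w := qw q in let x := qx q in let y := qy q in let z := qz q in
  mk9 (w*w+x*x-y*y-z*z) (2*(x*y - w*z)) (2*(x*z + w*y))
      (2*(x*y + w*z)) (w*w-x*x+y*y-z*z) (2*(y*z - w*x))
      (2*(x*z - w*y)) (2*(y*z + w*x)) (w*w-x*x-y*y+z*z).
Definition Rn (q : quat) : Mat := fun i j => Rq q i j / qN q.

Definition qpm (p q : quat) : Prop := qmul p q = qmul q p \/ qmul p q = qopp (qmul q p).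

Lemma qN_pos (q : quat) : qN q <> 0 -> 0 < qN q.
Proof. unfold qN; intro; nra. Qed.

Lemma Rq_mul (p q : quat) : meq (mmul (Rq p) (Rq q)) (Rq (qmul p q)).
Proof. apply meq9; unfold mmul, Rq, mk9, fidx, qmul; simpl; ring. Qed.

Lemma Rn_mul (p q : quat) : qN p <> 0 -> qN q <> 0 ->
  forall i j, mmul (Rn p) (Rn q) i j = Rq (qmul p q) i j / (qN p * qN q).
Proof.
  intros Hp Hq i j. rewrite <- (Rq_mul p q i j). unfold mmul, Rn. field. auto.
Qed.

Lemma Rq_opp (q : quat) : meq (Rq (qopp q)) (Rq q).
Proof. apply meq9; unfold Rq, mk9, fidx, qopp; simpl; ring. Qed.

Lemma Rn_comm (p q : quat) : qN p <> 0 -> qN q <> 0 -> qpm p q ->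
  meq (mmul (Rn p) (Rn q)) (mmul (Rn q) (Rn p)).
Proof.
  intros Hp Hq [H|H] i j; rewrite !Rn_mul by auto; rewrite H;
   [| rewrite Rq_opp]; f_equal; ring.
Qed.

Lemma Rn_SO3 (q : quat) : qN q <> 0 -> in_SO3 (Rn q).
Proof.
  intro H. split.
  - apply meq9; unfold mmul, mtr, Rn, Rq, mk9, fidx, mid, qN in *; simpl; field; auto.
  - unfold mdet, Rn, Rq, mk9, fidx, qN in *; simpl; field; auto.
Qed.


Ltac mstep H c := let F := fresh "F" in pose proof (f_equal (fun u => u * c) H) as F; cbv beta in F.

Ltac shep_case D w x y z :=
  exists (Q w x y z);
  assert (HN : qN (Q w x y z) = 4 * D) by (unfold qN; simpl; lra);
  split; [rewrite HN; intro; lra|];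
  apply meq9; unfold Rn; rewrite HN; unfold Rq, mk9, fidx; simpl;
  match goal with |- ?X / _ = ?a =>
    replace X with (4*D*a) by lra; field; intro; lra end.

Lemma shep (a11 a12 a13 a21 a22 a23 a31 a32 a33 : R) :
 a11*a11+a21*a21+a31*a31 - 1 = 0 -> a12*a12+a22*a22+a32*a32 - 1 = 0 -> a13*a13+a23*a23+a33*a33 - 1 = 0 ->
 a11*a12+a21*a22+a31*a32 = 0 -> a11*a13+a21*a23+a31*a33 = 0 -> a12*a13+a22*a23+a32*a33 = 0 ->
 a11 * (a22 * a33 - a23 * a32) - a12 * (a21 * a33 - a23 * a31) + a13 * (a21 * a32 - a22 * a31) - 1 = 0 ->
 exists q, qN q <> 0 /\ meq (Rn q) (mk9 a11 a12 a13 a21 a22 a23 a31 a32 a33).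
Proof.
  intros P11 P22 P33 P12 P13 P23 Pd.
  assert (C11 : a11 = a22*a33-a23*a32) by (mstep P11 (a22*a33-a23*a32); mstep P12 (a23*a31 - a21*a33); mstep P13 (a21*a32-a22*a31); mstep Pd a11; lra).
  assert (C21 : a21 = a13*a32 - a12*a33) by (mstep P11 (a13*a32 - a12*a33); mstep P12 (a11*a33-a13*a31); mstep P13 (a12*a31 - a11*a32); mstep Pd a21; lra).
  assert (C31 : a31 = a12*a23 - a13*a22) by (mstep P11 (a12*a23 - a13*a22); mstep P12 (a13*a21 - a11*a23); mstep P13 (a11*a22-a12*a21); mstep Pd a31; lra).
  assert (C12 : a12 = a23*a31 - a21*a33) by (mstep P12 (a22*a33-a23*a32); mstep P22 (a23*a31 - a21*a33); mstep P23 (a21*a32-a22*a31); mstep Pd a12; lra).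
  assert (C22 : a22 = a11*a33-a13*a31) by (mstep P12 (a13*a32 - a12*a33); mstep P22 (a11*a33-a13*a31); mstep P23 (a12*a31 - a11*a32); mstep Pd a22; lra).
  assert (C32 : a32 = a13*a21 - a11*a23) by (mstep P12 (a12*a23 - a13*a22); mstep P22 (a13*a21 - a11*a23); mstep P23 (a11*a22-a12*a21); mstep Pd a32; lra).
  assert (C13 : a13 = a21*a32-a22*a31) by (mstep P13 (a22*a33-a23*a32); mstep P23 (a23*a31 - a21*a33); mstep P33 (a21*a32-a22*a31); mstep Pd a13; lra).
  assert (C23 : a23 = a12*a31 - a11*a32) by (mstep P13 (a13*a32 - a12*a33); mstep P23 (a11*a33-a13*a31); mstep P33 (a12*a31 - a11*a32); mstep Pd a23; lra).
  assert (C33 : a33 = a11*a22-a12*a21) by (mstep P13 (a12*a23 - a13*a22); mstep P23 (a13*a21 - a11*a23); mstep P33 (a11*a22-a12*a21); mstep Pd a33; lra).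
  assert (R11 : a11*a11+a12*a12+a13*a13 = 1) by (mstep C11 a11; mstep C12 a12; mstep C13 a13; lra).
  assert (R22 : a21*a21+a22*a22+a23*a23 = 1) by (mstep C21 a21; mstep C22 a22; mstep C23 a23; lra).
  assert (R33 : a31*a31+a32*a32+a33*a33 = 1) by (mstep C31 a31; mstep C32 a32; mstep C33 a33; lra).
  assert (R12 : a11*a21+a12*a22+a13*a23 = 0) by (mstep C21 a11; mstep C22 a12; mstep C23 a13; lra).
  assert (R13 : a11*a31+a12*a32+a13*a33 = 0) by (mstep C31 a11; mstep C32 a12; mstep C33 a13; lra).
  assert (R23 : a21*a31+a22*a32+a23*a33 = 0) by (mstep C31 a21; mstep C32 a22; mstep C33 a23; lra).
  clear Pd.
  assert (HD : (1+a11+a22+a33 >= 1) \/ (1+a11-a22-a33 >= 1) \/ (1-a11+a22-a33 >= 1) \/ (1-a11-a22+a33 >= 1)) by lra.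
  destruct HD as [HD|[HD|[HD|HD]]].
  - shep_case (1+a11+a22+a33) (1+a11+a22+a33) (a32-a23) (a13-a31) (a21-a12).
  - shep_case (1+a11-a22-a33) (a32-a23) (1+a11-a22-a33) (a12+a21) (a13+a31).
  - shep_case (1-a11+a22-a33) (a13-a31) (a12+a21) (1-a11+a22-a33) (a23+a32).
  - shep_case (1-a11-a22+a33) (a21-a12) (a13+a31) (a23+a32) (1-a11-a22+a33).
Qed.


Lemma lift_SO3 (A : Mat) : in_SO3 A -> exists q, qN q <> 0 /\ meq (Rn q) A.
Proof.
  intros [HO Hd].
  pose proof (HO i0 i0) as O11; pose proof (HO i1 i1) as O22; pose proof (HO i2 i2) as O33;
  pose proof (HO i0 i1) as O12; pose proof (HO i0 i2) as O13; pose proof (HO i1 i2) as O23.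
  unfold mmul, mtr, mid, mdet in *; simpl in *.
  destruct (shep (A i0 i0) (A i0 i1) (A i0 i2) (A i1 i0) (A i1 i1) (A i1 i2) (A i2 i0) (A i2 i1) (A i2 i2))
    as [q [Hq Hm]]; try lra.
  exists q; split; auto.
  intros i j; rewrite Hm; fin_cases i; fin_cases j; reflexivity.
Qed.

Definition qscale (c : R) (q : quat) : quat := Q (c * qw q) (c * qx q) (c * qy q) (c * qz q).

Lemma Rq_scale (c : R) (q : quat) : forall i j, Rq (qscale c q) i j = c * c * Rq q i j.
Proof. intros i j; fin_cases i; fin_cases j; unfold qscale, Rq, mk9, fidx; simpl; ring. Qed.

Lemma Rn_unit (q : quat) : qN q = 1 -> meq (Rn q) (Rq q).
Proof. intros H i j; unfold Rn; rewrite H; field. Qed.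

Lemma lift_unit (A : Mat) : in_SO3 A -> exists q, qN q = 1 /\ 0 <= qw q /\ meq (Rq q) A.
Proof.
  intro H; destruct (lift_SO3 A H) as [q [Hq Hm]].
  pose proof (qN_pos q Hq) as Hp.
  set (s := sqrt (qN q)).
  assert (Hs : s * s = qN q) by (apply sqrt_sqrt; lra).
  assert (Hs0 : 0 < s) by (apply sqrt_lt_R0; lra).
  set (u := qscale (/ s) q).
  assert (Hu : qN u = 1).
  { assert (E : qN u = / s * / s * qN q) by (unfold u, qscale, qN; simpl; ring).
    rewrite E, <- Hs; field; intro; lra. }
  assert (HRu : meq (Rq u) A).
  { intros i j. rewrite <- Hm. unfold u; rewrite Rq_scale. unfold Rn. rewrite <- Hs. field; intro; lra. }
  clearbody u. destruct (Rle_dec 0 (qw u)) as [Hw|Hw].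
  - exists u; auto.
  - exists (qopp u); repeat split.
    + unfold qopp, qN in *; simpl; lra.
    + unfold qopp; simpl; lra.
    + intros i j; rewrite Rq_opp; apply HRu.
Qed.


Lemma mmul_meq (A A' B B' : Mat) : meq A A' -> meq B B' -> meq (mmul A B) (mmul A' B').
Proof. intros HA HB i j; unfold mmul; rewrite !HA, !HB; reflexivity. Qed.

Lemma meq_sym A B : meq A B -> meq B A.
Proof. intros H i j; symmetry; apply H. Qed.
Lemma meq_trans A B C : meq A B -> meq B C -> meq A C.
Proof. intros H1 H2 i j; rewrite H1; apply H2. Qed.

Lemma qN_mul p q : qN (qmul p q) = qN p * qN q.
Proof. unfold qN, qmul; simpl; ring. Qed.

Lemma qmul_assoc p q r : qmul (qmul p q) r = qmul p (qmul q r).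
Proof. apply quat_eq; unfold qmul; simpl; ring. Qed.

Lemma Rq_one : meq (Rq qone) mid.
Proof. apply meq9; unfold Rq, mk9, fidx, qone, mid; simpl; ring. Qed.

Lemma ker (p : quat) : qN p = 1 -> meq (Rq p) mid -> p = qone \/ p = qopp qone.
Proof.
  intros HN H.
  pose proof (H i0 i0) as H1; pose proof (H i1 i1) as H2; pose proof (H i2 i2) as H3.
  unfold Rq, mk9, fidx, mid, qN in *; simpl in *.
  destruct p as [w x y z]; simpl in *.
  assert (x = 0) by nra. assert (y = 0) by nra. assert (z = 0) by nra. subst.
  assert (w = 1 \/ w = -1) by (destruct (Rle_dec 0 w); [left|right]; nra).
  destruct H0; subst; [left|right]; apply quat_eq; unfold qopp, qone; simpl; lra.
Qed.

Lemma Rq_qqc q : forall i j, Rq (qmul q (qconj q)) i j = qN q * qN q * mid i j.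
Proof. intros i j; fin_cases i; fin_cases j; unfold Rq, mk9, fidx, qmul, qconj, mid, qN; simpl; ring. Qed.

Lemma qN_conj q : qN (qconj q) = qN q.
Proof. unfold qN, qconj; simpl; ring. Qed.
Lemma qconj_mul q : qmul (qconj q) q = Q (qN q) 0 0 0.
Proof. apply quat_eq; unfold qmul, qconj, qN; simpl; ring. Qed.

Lemma kernel2 p q : qN p = 1 -> qN q = 1 -> meq (Rq p) (Rq q) -> p = q \/ p = qopp q.
Proof.
  intros Hp Hq H.
  set (c := qmul p (qconj q)).
  assert (Hc : meq (Rq c) mid).
  { intros i j. unfold c. rewrite <- (Rq_mul p (qconj q)).
    assert (E : mmul (Rq p) (Rq (qconj q)) i j = mmul (Rq q) (Rq (qconj q)) i j)
      by (unfold mmul; rewrite !H; reflexivity).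
    rewrite E, Rq_mul, Rq_qqc, Hq; ring. }
  assert (HcN : qN c = 1) by (unfold c; rewrite qN_mul, qN_conj, Hp, Hq; ring).
  assert (Hp' : p = qmul c q).
  { unfold c. rewrite qmul_assoc, qconj_mul, Hq. apply quat_eq; unfold qmul; simpl; ring. }
  destruct (ker c HcN Hc) as [E|E]; rewrite Hp', E; [left|right]; apply quat_eq; unfold qmul, qopp, qone; simpl; ring.
Qed.

Lemma comm_lift p q : qN p = 1 -> qN q = 1 ->
  meq (mmul (Rq p) (Rq q)) (mmul (Rq q) (Rq p)) -> qpm p q.
Proof.
  intros Hp Hq H.
  assert (E : meq (Rq (qmul p q)) (Rq (qmul q p))).
  { intros i j; rewrite <- !Rq_mul; apply H. }
  apply kernel2 in E; [|rewrite qN_mul, Hp, Hq; ring|rewrite qN_mul, Hp, Hq; ring].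
  unfold qpm; exact E.
Qed.

Lemma Hom_lift n x : in_HomSO3 n x ->
  exists q : Fin.t n -> quat,
    (forall k, qN (q k) = 1 /\ 0 <= qw (q k) /\ meq (Rq (q k)) (x k)) /\
    (forall k l, qpm (q k) (q l)).
Proof.
  intros [HS HC].
  exists (fun k => proj1_sig (constructive_indefinite_description _ (lift_unit (x k) (HS k)))).
  assert (P : forall k, qN (proj1_sig (constructive_indefinite_description _ (lift_unit (x k) (HS k)))) = 1 /\
     0 <= qw (proj1_sig (constructive_indefinite_description _ (lift_unit (x k) (HS k)))) /\
     meq (Rq (proj1_sig (constructive_indefinite_description _ (lift_unit (x k) (HS k))))) (x k))
    by (intro k; exact (proj2_sig (constructive_indefinite_description _ (lift_unit (x k) (HS k))))).
  split; [exact P|].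
  intros k l. destruct (P k) as [Hk [_ Mk]]; destruct (P l) as [Hl [_ Ml]].
  apply comm_lift; auto.
  eapply meq_trans; [apply mmul_meq; eassumption|].
  eapply meq_trans; [apply HC|].
  apply mmul_meq; apply meq_sym; assumption.
Qed.


Lemma c_plus f g : continuity f -> continuity g -> continuity (fun t => f t + g t).
Proof. intros; apply (continuity_plus f g); auto. Qed.
Lemma c_minus f g : continuity f -> continuity g -> continuity (fun t => f t - g t).
Proof. intros; apply (continuity_minus f g); auto. Qed.
Lemma c_mult f g : continuity f -> continuity g -> continuity (fun t => f t * g t).
Proof. intros; apply (continuity_mult f g); auto. Qed.
Lemma c_opp f : continuity f -> continuity (fun t => - f t).
Proof. intros; apply (continuity_opp f); auto. Qed.
Lemma c_div f g : continuity f -> continuity g -> (forall t, g t <> 0) -> continuity (fun t => f t / g t).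
Proof. intros; apply (continuity_div f g); auto. Qed.
Lemma c_const (c : R) : continuity (fun _ => c).
Proof. apply continuity_const; intros ? ?; reflexivity. Qed.
Lemma c_id : continuity (fun t => t).
Proof. apply derivable_continuous, derivable_id. Qed.

Ltac cont := repeat first [ assumption | apply c_id | apply c_const | apply c_plus | apply c_minus
   | apply c_mult | apply c_opp ].

Lemma in_SO3_meq A B : meq A B -> in_SO3 A -> in_SO3 B.
Proof.
  intros H [H1 H2]; split.
  - intros i j; rewrite <- H1; unfold mmul, mtr; rewrite !H; reflexivity.
  - rewrite <- H2; unfold mdet; rewrite !H; reflexivity.
Qed.

Lemma Hom_of_quat n (w : Fin.t n -> quat) (x : Fin.t n -> Mat) :
  (forall k, qN (w k) <> 0) -> (forall k l, qpm (w k) (w l)) ->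
  (forall k, meq (Rn (w k)) (x k)) -> in_HomSO3 n x.
Proof.
  intros Hn Hc Hm; split.
  - intro k; apply (in_SO3_meq (Rn (w k))); auto; apply Rn_SO3; auto.
  - intros k l.
    eapply meq_trans; [apply mmul_meq; apply meq_sym; apply Hm|].
    eapply meq_trans; [apply Rn_comm; auto|].
    apply mmul_meq; apply Hm.
Qed.

Lemma path_of_quat n (w : R -> Fin.t n -> quat) (x y : Fin.t n -> Mat) :
  (forall k, continuity (fun t => qw (w t k))) ->
  (forall k, continuity (fun t => qx (w t k))) ->
  (forall k, continuity (fun t => qy (w t k))) ->
  (forall k, continuity (fun t => qz (w t k))) ->
  (forall t k, qN (w t k) <> 0) ->
  (forall t, 0 <= t <= 1 -> forall k l, qpm (w t k) (w t l)) ->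
  (forall k, meq (Rn (w 0 k)) (x k)) -> (forall k, meq (Rn (w 1 k)) (y k)) ->
  path_conn n x y.
Proof.
  intros C1 C2 C3 C4 Hn Hc H0 H1.
  exists (fun t k => Rn (w t k)). split; [|split; [|split]]; auto.
  - intros k i j. specialize (C1 k); specialize (C2 k); specialize (C3 k); specialize (C4 k).
    unfold Rn. apply c_div; [| |intro t; apply Hn].
    + fin_cases i; fin_cases j; unfold Rq, mk9, fidx; simpl; cont.
    + unfold qN; cont.
  - intros t Ht. apply (Hom_of_quat n (w t)); auto. intro k; apply meq9; reflexivity.
Qed.


Definition qI := Q 0 1 0 0.
Definition qJ := Q 0 0 1 0.
Definition qK := Q 0 0 0 1.
Definition eqv (v : V) : quat :=
  match v with
  | (false, false) => qone | (false, true) => qI | (true, false) => qJ | (true, true) => qK end.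

Lemma embQ_Rq v : meq (Rq (eqv v)) (embQ v).
Proof.
  destruct v as [[|] [|]]; apply meq9; unfold Rq, mk9, fidx, embQ, eqv, sgn, qone, qI, qJ, qK; simpl; ring.
Qed.

Lemma qN_eqv v : qN (eqv v) = 1.
Proof. destruct v as [[|] [|]]; unfold qN, eqv, qone, qI, qJ, qK; simpl; ring. Qed.

Lemma qpm_eqv v w : qpm (eqv v) (eqv w).
Proof.
  unfold qpm.
  destruct v as [[|] [|]]; destruct w as [[|] [|]];
  first [ left; apply quat_eq; unfold eqv, qmul, qopp, qone, qI, qJ, qK; simpl; ring
        | right; apply quat_eq; unfold eqv, qmul, qopp, qone, qI, qJ, qK; simpl; ring ].
Qed.


Definition lin (r : quat) (t : R) : quat := Q ((1-t) + t * qw r) (t * qx r) (t * qy r) (t * qz r).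
Definition rot (s q : quat) : quat := qmul (qmul s q) (qconj s).

Lemma lin0 r : lin r 0 = qone.
Proof. apply quat_eq; unfold lin, qone; simpl; ring. Qed.
Lemma lin1 r : lin r 1 = r.
Proof. apply quat_eq; unfold lin; simpl; ring. Qed.

Lemma sq0 a : a * a = 0 -> a = 0.
Proof. intro H; destruct (Rmult_integral a a H); auto. Qed.
Lemma sq4 a b c d : a*a+b*b+c*c+d*d = 0 -> a = 0 /\ b = 0 /\ c = 0 /\ d = 0.
Proof.
  intro H. pose proof (Rle_0_sqr a); pose proof (Rle_0_sqr b); pose proof (Rle_0_sqr c);
  pose proof (Rle_0_sqr d); unfold Rsqr in *.
  repeat split; apply sq0; lra.
Qed.

Lemma lin_nz r : qN r = 1 -> 0 <= qw r -> forall t, qN (lin r t) <> 0.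
Proof.
  intros H1 H2 t H. unfold qN, lin in *; simpl in *.
  destruct r as [a b c d]; simpl in *.
  destruct (sq4 _ _ _ _ H) as [E4 [E1 [E2 E3]]].
  destruct (Req_dec t 0) as [->|Ht]; [lra|].
  assert (b = 0) by (apply (Rmult_eq_reg_l t); lra).
  assert (c = 0) by (apply (Rmult_eq_reg_l t); lra).
  assert (d = 0) by (apply (Rmult_eq_reg_l t); lra). subst.
  assert (a = 1) by nra. subst. lra.
Qed.

Lemma lin_nz1 r : qw r = 1 -> forall t, qN (lin r t) <> 0.
Proof. intros H t. unfold qN, lin; simpl; rewrite H. intro. nra. Qed.

Lemma lin_comm a b s : qmul a b = qmul b a -> qmul (lin a s) (lin b s) = qmul (lin b s) (lin a s).
Proof.
  intro H.
  pose proof (f_equal qw H) as H1; pose proof (f_equal qx H) as H2;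
  pose proof (f_equal qy H) as H3; pose proof (f_equal qz H) as H4.
  unfold qmul in *; simpl in *.
  apply quat_eq; unfold lin; simpl.
  - mstep H1 (s*s); lra.
  - mstep H2 (s*s); lra.
  - mstep H3 (s*s); lra.
  - mstep H4 (s*s); lra.
Qed.

Lemma case1 n (q : Fin.t n -> quat) (x : Fin.t n -> Mat) :
  (forall k, qN (q k) = 1 /\ 0 <= qw (q k)) ->
  (forall k l, qmul (q k) (q l) = qmul (q l) (q k)) ->
  (forall k, meq (Rq (q k)) (x k)) -> path_conn n x (trivHom n).
Proof.
  intros Hu Hc Hm.
  apply (path_of_quat n (fun t k => lin (q k) (1 - t))).
  - intro k; unfold lin; simpl; cont.
  - intro k; unfold lin; simpl; cont.
  - intro k; unfold lin; simpl; cont.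
  - intro k; unfold lin; simpl; cont.
  - intros t k; destruct (Hu k); apply lin_nz; auto.
  - intros t _ k l; left; apply lin_comm; auto.
  - intro k. replace (1 - 0) with 1 by ring. rewrite lin1.
    destruct (Hu k) as [H1 _]. eapply meq_trans; [apply Rn_unit; auto|apply Hm].
  - intro k. replace (1 - 1) with 0 by ring. rewrite lin0.
    eapply meq_trans; [apply Rn_unit; unfold qN, qone; simpl; ring|].
    unfold trivHom; apply Rq_one.
Qed.

Lemma qN_rot s q : qN (rot s q) = qN s * qN s * qN q.
Proof. unfold qN, rot, qmul, qconj; simpl; ring. Qed.

Lemma rot_mul s a b : qmul (rot s a) (rot s b) = qscale (qN s) (rot s (qmul a b)).
Proof. apply quat_eq; unfold rot, qmul, qconj, qscale, qN; simpl; ring. Qed.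

Lemma rot_opp s a : rot s (qopp a) = qopp (rot s a).
Proof. apply quat_eq; unfold rot, qmul, qconj, qopp; simpl; ring. Qed.

Lemma scale_opp c a : qscale c (qopp a) = qopp (qscale c a).
Proof. apply quat_eq; unfold qscale, qopp; simpl; ring. Qed.

Lemma qpm_rot s a b : qpm a b -> qpm (rot s a) (rot s b).
Proof.
  intros [H|H]; unfold qpm; rewrite !rot_mul, H; [left; reflexivity|right].
  rewrite rot_opp, scale_opp; reflexivity.
Qed.

Lemma rot_one q : rot qone q = q.
Proof. apply quat_eq; unfold rot, qmul, qconj, qone; simpl; ring. Qed.

Lemma rot_comp r a :
  rot r a = Q (qN r * qw a)
     (Rq r i0 i0 * qx a + Rq r i0 i1 * qy a + Rq r i0 i2 * qz a)
     (Rq r i1 i0 * qx a + Rq r i1 i1 * qy a + Rq r i1 i2 * qz a)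
     (Rq r i2 i0 * qx a + Rq r i2 i1 * qy a + Rq r i2 i2 * qz a).
Proof. apply quat_eq; unfold rot, qmul, qconj, qN, Rq, mk9, fidx; simpl; ring. Qed.

Lemma Rq_conj r : forall i j, Rq (qconj r) i j = Rq r j i.
Proof. intros i j; fin_cases i; fin_cases j; unfold Rq, mk9, fidx, qconj; simpl; ring. Qed.


Lemma anti_pure p q : qN p = 1 -> qN q = 1 -> qmul p q = qopp (qmul q p) ->
  qw p = 0 /\ qw q = 0 /\ qx p * qx q + qy p * qy q + qz p * qz q = 0.
Proof.
  intros Hp Hq H.
  pose proof (f_equal qw H) as Ew; pose proof (f_equal qx H) as Ex;
  pose proof (f_equal qy H) as Ey; pose proof (f_equal qz H) as Ez.
  unfold qmul, qopp, qN in *; simpl in *.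
  destruct p as [a b c d]; destruct q as [e f g h]; simpl in *.
  assert (HA : a = 0).
  { mstep Ex f; mstep Ey g; mstep Ez h; mstep Ew e; mstep Hq a; lra. }
  assert (HE : e = 0).
  { mstep Ex b; mstep Ey c; mstep Ez d; mstep Ew a; mstep Hp e; lra. }
  subst; repeat split; lra.
Qed.

Lemma sq1 a : a * a = 1 -> a = 1 \/ a = -1.
Proof. intro H; destruct (Rle_dec 0 a); [left|right]; nra. Qed.

Lemma classify_u u : qN u = 1 -> qpm u qI -> qpm u qJ ->
  exists v, u = eqv v \/ u = qopp (eqv v).
Proof.
  intros HN H1 H2. destruct u as [a b c d].
  unfold qpm, qN in *; simpl in *.
  destruct H1 as [H1|H1]; destruct H2 as [H2|H2];
  pose proof (f_equal qw H1) as E1; pose proof (f_equal qx H1) as E2;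
  pose proof (f_equal qy H1) as E3; pose proof (f_equal qz H1) as E4;
  pose proof (f_equal qw H2) as F1; pose proof (f_equal qx H2) as F2;
  pose proof (f_equal qy H2) as F3; pose proof (f_equal qz H2) as F4;
  unfold qmul, qopp, qI, qJ in *; simpl in *.
  - exists (false, false). assert (b = 0) by lra. assert (c = 0) by lra. assert (d = 0) by lra. subst.
    destruct (sq1 a) as [->| ->]; [lra| left | right]; apply quat_eq; unfold eqv, qone, qopp; simpl; lra.
  - exists (false, true). assert (a = 0) by lra. assert (c = 0) by lra. assert (d = 0) by lra. subst.
    destruct (sq1 b) as [->| ->]; [lra| left | right]; apply quat_eq; unfold eqv, qI, qopp; simpl; lra.
  - exists (true, false). assert (a = 0) by lra. assert (b = 0) by lra. assert (d = 0) by lra. subst.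
    destruct (sq1 c) as [->| ->]; [lra| left | right]; apply quat_eq; unfold eqv, qJ, qopp; simpl; lra.
  - exists (true, true). assert (a = 0) by lra. assert (b = 0) by lra. assert (c = 0) by lra. subst.
    destruct (sq1 d) as [->| ->]; [lra| left | right]; apply quat_eq; unfold eqv, qK, qopp; simpl; lra.
Qed.

Lemma cross_SO3 (a b c d e f : R) :
  a*a+b*b+c*c = 1 -> d*d+e*e+f*f = 1 -> a*d+b*e+c*f = 0 ->
  in_SO3 (mk9 a d (b*f - c*e) b e (c*d - a*f) c f (a*e - b*d)).
Proof.
  intros H1 H2 H3.
  assert (L : (b*f - c*e)*(b*f - c*e) + (c*d - a*f)*(c*d - a*f) + (a*e - b*d)*(a*e - b*d) = 1).
  { replace 1 with ((a*a+b*b+c*c)*(d*d+e*e+f*f) - (a*d+b*e+c*f)*(a*d+b*e+c*f)) by (rewrite H1, H2, H3; ring).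
    ring. }
  split.
  - apply meq9; unfold mmul, mtr, mid, mk9, fidx; simpl; try lra; ring_simplify; try lra; ring.
  - unfold mdet, mk9, fidx; simpl. rewrite <- L. ring.
Qed.

Lemma rightMap_meq n b k : meq (rightMap n b k) (embQ (b k)).
Proof. intros i j; reflexivity. Qed.

Lemma classify n x : in_HomSO3 n x ->
  path_conn n x (trivHom n) \/ exists b, path_conn n x (rightMap n b).
Proof.
  intro HH. destruct (Hom_lift n x HH) as [q [Hu Hc]].
  destruct (classic (forall k l, qmul (q k) (q l) = qmul (q l) (q k))) as [HC|HN].
  - left; apply (case1 n q); auto.
    + intro k; destruct (Hu k) as [? [? ?]]; auto.
    + intro k; destruct (Hu k) as [? [? ?]]; auto.
  - right.
    apply not_all_ex_not in HN; destruct HN as [k HN].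
    apply not_all_ex_not in HN; destruct HN as [l HN].
    assert (HA : qmul (q k) (q l) = qopp (qmul (q l) (q k))) by (destruct (Hc k l); tauto).
    destruct (Hu k) as [Nk [_ _]]; destruct (Hu l) as [Nl [_ _]].
    destruct (anti_pure _ _ Nk Nl HA) as [Wk [Wl Dkl]].
    set (p := q k) in *; set (p' := q l) in *.
    assert (Up : qx p * qx p + qy p * qy p + qz p * qz p = 1) by (unfold qN in Nk; rewrite Wk in Nk; lra).
    assert (Up' : qx p' * qx p' + qy p' * qy p' + qz p' * qz p' = 1) by (unfold qN in Nl; rewrite Wl in Nl; lra).
    pose proof (cross_SO3 _ _ _ _ _ _ Up Up' Dkl) as HM.
    destruct (lift_unit _ HM) as [r0 [Hr0 [Hr0w Hr0m]]].
    set (r := qconj r0).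
    assert (Nr : qN r = 1) by (unfold r; rewrite qN_conj; auto).
    assert (Wr : 0 <= qw r) by (unfold r, qconj; simpl; auto).
    assert (Rr : forall i j, Rq r i j = mk9 (qx p) (qx p') (qy p * qz p' - qz p * qy p') (qy p) (qy p')
                  (qz p * qx p' - qx p * qz p') (qz p) (qz p') (qx p * qy p' - qy p * qx p') j i)
      by (intros i j; unfold r; rewrite Rq_conj; apply Hr0m).
    assert (RI : rot r p = qI).
    { rewrite rot_comp, !Rr, Nr, Wk. apply quat_eq; unfold mk9, fidx, qI; simpl; [ring|lra|lra|ring]. }
    assert (RJ : rot r p' = qJ).
    { rewrite rot_comp, !Rr, Nr, Wl. apply quat_eq; unfold mk9, fidx, qJ; simpl; [ring|lra|lra|ring]. }
    assert (Hb : forall m, exists v, meq (Rq (rot r (q m))) (embQ v)).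
    { intro m. destruct (Hu m) as [Nm _].
      assert (Nu : qN (rot r (q m)) = 1) by (rewrite qN_rot, Nr, Nm; ring).
      destruct (classify_u (rot r (q m)) Nu) as [v [E|E]].
      - rewrite <- RI; apply qpm_rot, Hc.
      - rewrite <- RJ; apply qpm_rot, Hc.
      - exists v; rewrite E; apply embQ_Rq.
      - exists v; rewrite E; intros i j; rewrite Rq_opp; apply embQ_Rq. }
    exists (fun m => proj1_sig (constructive_indefinite_description _ (Hb m))).
    apply (path_of_quat n (fun t m => rot (lin r t) (q m))).
    + intro m; unfold rot, lin, qmul, qconj; simpl; cont.
    + intro m; unfold rot, lin, qmul, qconj; simpl; cont.
    + intro m; unfold rot, lin, qmul, qconj; simpl; cont.
    + intro m; unfold rot, lin, qmul, qconj; simpl; cont.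
    + intros t m. rewrite qN_rot. destruct (Hu m) as [Nm _]. rewrite Nm.
      pose proof (lin_nz r Nr Wr t). intro E. apply H. nra.
    + intros t _ m m'. apply qpm_rot, Hc.
    + intro m. rewrite lin0, rot_one. destruct (Hu m) as [Nm [_ Mm]].
      eapply meq_trans; [apply Rn_unit; auto|exact Mm].
    + intro m. rewrite lin1. destruct (Hu m) as [Nm _].
      eapply meq_trans; [apply Rn_unit; rewrite qN_rot, Nr, Nm; ring|].
      exact (proj2_sig (constructive_indefinite_description _ (Hb m))).
Qed.


Definition mtrace (A : Mat) : R := A i0 i0 + A i1 i1 + A i2 i2.
Definition Fm (A B : Mat) : R := mtrace A + mtrace B + mtrace (mmul A B).

Lemma Fm_meq A A' B B' : meq A A' -> meq B B' -> Fm A B = Fm A' B'.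
Proof. intros HA HB; unfold Fm, mtrace, mmul; rewrite !HA, !HB; reflexivity. Qed.

Lemma ineq x y s : s*s = (1-x*x)*(1-y*y) -> x*x <= 1 -> y*y <= 1 -> x*x+y*y+(x*y-s)*(x*y-s) >= 1/4.
Proof. intros. nra. Qed.

Lemma Fm_dich A B : in_SO3 A -> in_SO3 B -> meq (mmul A B) (mmul B A) ->
  Fm A B = -3 \/ Fm A B >= -2.
Proof.
  intros HA HB HC.
  destruct (lift_unit A HA) as [p [Np [_ Mp]]].
  destruct (lift_unit B HB) as [q [Nq [_ Mq]]].
  assert (Hpq : qpm p q).
  { apply comm_lift; auto.
    eapply meq_trans; [apply mmul_meq; eassumption|].
    eapply meq_trans; [apply HC|].
    apply mmul_meq; apply meq_sym; assumption. }
  rewrite <- (Fm_meq _ _ _ _ Mp Mq).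
  assert (E : Fm (Rq p) (Rq q) = mtrace (Rq p) + mtrace (Rq q) + mtrace (Rq (qmul p q)))
    by (unfold Fm, mtrace; rewrite !Rq_mul; reflexivity).
  rewrite E. clear E.
  destruct Hpq as [H|H].
  - right.
    pose proof (f_equal qx H) as E2; pose proof (f_equal qy H) as E3; pose proof (f_equal qz H) as E4.
    unfold mtrace, Rq, mk9, fidx, qmul, qN in *; simpl in *.
    destruct p as [a b c d]; destruct q as [e f g h]; simpl in *.
    assert (Cx : c*h - d*g = 0) by lra. assert (Cy : d*f - b*h = 0) by lra. assert (Cz : b*g - c*f = 0) by lra.
    assert (L : (b*f+c*g+d*h)*(b*f+c*g+d*h) = (1-a*a)*(1-e*e)).
    { assert (P1 : b*b+c*c+d*d = 1-a*a) by lra. assert (P2 : f*f+g*g+h*h = 1-e*e) by lra.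
      rewrite <- P1, <- P2.
      replace ((b*b+c*c+d*d)*(f*f+g*g+h*h)) with ((b*f+c*g+d*h)*(b*f+c*g+d*h) + (c*h-d*g)*(c*h-d*g)
          + (d*f-b*h)*(d*f-b*h) + (b*g-c*f)*(b*g-c*f)) by ring.
      rewrite Cx, Cy, Cz; ring. }
    assert (a*a <= 1) by nra. assert (e*e <= 1) by nra.
    pose proof (ineq a e (b*f+c*g+d*h) L H0 H1).
    assert (NM : (a*e - b*f - c*g - d*h)*(a*e - b*f - c*g - d*h) + (a*f + b*e + c*h - d*g)*(a*f + b*e + c*h - d*g)
      + (a*g - b*h + c*e + d*f)*(a*g - b*h + c*e + d*f) + (a*h + b*g - c*f + d*e)*(a*h + b*g - c*f + d*e) = 1).
    { replace 1 with ((a*a+b*b+c*c+d*d)*(e*e+f*f+g*g+h*h)) by (rewrite Np, Nq; ring). ring. }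
    nra.
  - left.
    destruct (anti_pure p q Np Nq H) as [Wp [Wq D]].
    assert (NM : qN (qmul p q) = 1) by (rewrite qN_mul, Np, Nq; ring).
    unfold mtrace, Rq, mk9, fidx, qmul, qN in *; simpl in *.
    destruct p as [a b c d]; destruct q as [e f g h]; simpl in *. subst.
    nra.
Qed.


Lemma Fm_Hom n x k l : in_HomSO3 n x -> Fm (x k) (x l) = -3 \/ Fm (x k) (x l) >= -2.
Proof. intros [HS HC]; apply Fm_dich; auto. Qed.

Lemma inv_path n x y k l : path_conn n x y ->
  (Fm (x k) (x l) < -5/2 <-> Fm (y k) (y l) < -5/2).
Proof.
  intros [g [Hc [Hh [H0 H1]]]].
  set (f := fun t => Fm (g t k) (g t l)).
  assert (Cf : continuity f).
  { unfold f, Fm, mtrace, mmul.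
    repeat first [ apply Hc | apply c_plus | apply c_mult ]. }
  assert (F0 : f 0 = Fm (x k) (x l)) by (apply Fm_meq; auto).
  assert (F1 : f 1 = Fm (y k) (y l)) by (apply Fm_meq; auto).
  assert (D : forall t, 0 <= t <= 1 -> f t = -3 \/ f t >= -2) by (intros t Ht; apply Fm_Hom; auto).
  rewrite <- F0, <- F1.
  assert (N1 : ~ (f 0 < -5/2 /\ f 1 > -5/2)).
  { intros [A B].
    destruct (IVT (fun t => f t + 5/2) 0 1) as [z [Hz Ez]].
    + apply c_plus; auto; apply c_const.
    + lra.
    + lra.
    + lra.
    + destruct (D z Hz); lra. }
  assert (N2 : ~ (f 0 > -5/2 /\ f 1 < -5/2)).
  { intros [A B].
    destruct (IVT (fun t => - f t - 5/2) 0 1) as [z [Hz Ez]].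
    + apply c_minus; [apply c_opp; auto|apply c_const].
    + lra.
    + lra.
    + lra.
    + destruct (D z Hz); lra. }
  destruct (D 0 ltac:(lra)); destruct (D 1 ltac:(lra)); split; intro; try lra;
    exfalso; first [apply N1; split; lra | apply N2; split; lra].
Qed.


Definition veqb (v w : V) : bool := Bool.eqb (fst v) (fst w) && Bool.eqb (snd v) (snd w).
Definition indb (v w : V) : bool := negb (veqb v V0) && negb (veqb w V0) && negb (veqb v w).

Lemma Fm_embQ v w : Fm (embQ v) (embQ w) < -5/2 <-> indb v w = true.
Proof.
  destruct v as [[|] [|]]; destruct w as [[|] [|]];
  unfold Fm, mtrace, mmul, embQ, sgn; simpl; split; intro; try lra; try discriminate; try reflexivity.
Qed.

Lemma Fm_mid : Fm mid mid = 9.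
Proof. unfold Fm, mtrace, mmul, mid; simpl; ring. Qed.

Definition sw (v x : V) : V :=
  if veqb x v then (true, false) else if veqb x (true, false) then v else x.

Lemma sw_sigma v : v <> V0 -> in_Sigma3 (sw v).
Proof.
  intro H; split.
  - intros x y; destruct v as [[|] [|]]; destruct x as [[|] [|]]; destruct y as [[|] [|]];
      unfold sw; simpl; intro E; first [reflexivity | discriminate | exfalso; apply H; reflexivity].
  - destruct v as [[|] [|]]; unfold sw, V0; simpl; first [reflexivity | exfalso; apply H; reflexivity].
Qed.

Lemma sw_val v x : v <> V0 -> indb x v = false -> sw v x = incl (fst (sw v x)).
Proof.
  intros H; destruct v as [[|] [|]]; destruct x as [[|] [|]]; unfold sw, incl; simpl; intro E;
    first [reflexivity | discriminate | exfalso; apply H; reflexivity].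
Qed.

Definition vxor (a b : V) : V := (xorb (fst a) (fst b), xorb (snd a) (snd b)).
Definition sfun (x y x' y' v : V) : V :=
  if veqb v x then x' else if veqb v y then y' else if veqb v V0 then V0 else vxor x' y'.

Lemma sfun_inj x y x' y' : indb x y = true -> indb x' y' = true ->
  forall v w, sfun x y x' y' v = sfun x y x' y' w -> v = w.
Proof.
  destruct x as [[|] [|]]; destruct y as [[|] [|]]; destruct x' as [[|] [|]]; destruct y' as [[|] [|]];
  intros H1 H2; try discriminate;
  intros v w; destruct v as [[|] [|]]; destruct w as [[|] [|]]; unfold sfun; simpl; intro E;
  first [reflexivity | discriminate].
Qed.

Lemma sfun_0 x y x' y' : indb x y = true -> sfun x y x' y' V0 = V0.
Proof.
  destruct x as [[|] [|]]; destruct y as [[|] [|]]; intro H; try discriminate; reflexivity.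
Qed.

Lemma sfun_val x y x' y' m m' : indb x y = true -> indb x' y' = true ->
  indb m x = indb m' x' -> indb m y = indb m' y' -> m' = sfun x y x' y' m.
Proof.
  destruct x as [[|] [|]]; destruct y as [[|] [|]]; destruct x' as [[|] [|]]; destruct y' as [[|] [|]];
  intros H1 H2; try discriminate;
  destruct m as [[|] [|]]; destruct m' as [[|] [|]]; unfold sfun; simpl; intros E1 E2;
  first [reflexivity | discriminate].
Qed.


Lemma Rn_scale c q : c <> 0 -> qN q <> 0 -> meq (Rn (qscale c q)) (Rn q).
Proof.
  intros Hc Hq i j. unfold Rn. rewrite Rq_scale.
  assert (E : qN (qscale c q) = c * c * qN q) by (unfold qN, qscale; cbn [qw qx qy qz]; ring).
  rewrite E. field; auto.
Qed.

Lemma Rn_opp q : meq (Rn (qopp q)) (Rn q).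
Proof.
  intros i j. unfold Rn. rewrite Rq_opp.
  assert (E : qN (qopp q) = qN q) by (unfold qN, qopp; cbn [qw qx qy qz]; ring).
  rewrite E; reflexivity.
Qed.

Lemma qN_opp q : qN (qopp q) = qN q.
Proof. unfold qN, qopp; cbn [qw qx qy qz]; ring. Qed.

Lemma rot_to r v w : qN r <> 0 ->
  (rot r (eqv v) = qscale (qN r) (eqv w) \/ rot r (eqv v) = qscale (qN r) (qopp (eqv w))) ->
  meq (Rn (rot r (eqv v))) (embQ w).
Proof.
  intros Hr [E|E]; rewrite E.
  - eapply meq_trans; [apply Rn_scale; [auto| rewrite qN_eqv; intro; lra]|].
    eapply meq_trans; [apply Rn_unit, qN_eqv|apply embQ_Rq].
  - eapply meq_trans; [apply Rn_scale; [auto| rewrite qN_opp, qN_eqv; intro; lra]|].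
    eapply meq_trans; [apply Rn_opp|]. eapply meq_trans; [apply Rn_unit, qN_eqv|apply embQ_Rq].
Qed.

Ltac rcheck := apply rot_to; [unfold qN, qone; cbn [qw qx qy qz]; intro; lra|];
  first [ left; apply quat_eq; unfold rot, qmul, qconj, qscale, qopp, eqv, qN, qone, qI, qJ, qK;
          cbn [qw qx qy qz]; ring
        | right; apply quat_eq; unfold rot, qmul, qconj, qscale, qopp, eqv, qN, qone, qI, qJ, qK;
          cbn [qw qx qy qz]; ring ].

Ltac rtry r EI EJ EK H0 := exists r; split; [reflexivity|];
  intros [[|] [|]]; rewrite ?EI, ?EJ, ?EK, ?H0; rcheck.

Lemma sigma_quat s : in_Sigma3 s ->
  exists r, qw r = 1 /\ forall v, meq (Rn (rot r (eqv v))) (embQ (s v)).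
Proof.
  intros [Hi H0].
  assert (D1 : s (false, true) <> s (true, false)) by (intro E; apply Hi in E; discriminate).
  assert (D2 : s (false, true) <> s (true, true)) by (intro E; apply Hi in E; discriminate).
  assert (D3 : s (true, false) <> s (true, true)) by (intro E; apply Hi in E; discriminate).
  assert (D4 : s (false, true) <> V0) by (rewrite <- H0; intro E; apply Hi in E; discriminate).
  assert (D5 : s (true, false) <> V0) by (rewrite <- H0; intro E; apply Hi in E; discriminate).
  assert (D6 : s (true, true) <> V0) by (rewrite <- H0; intro E; apply Hi in E; discriminate).
  unfold V0 in *.
  destruct (s (false, true)) as [[|] [|]] eqn:EI; destruct (s (true, false)) as [[|] [|]] eqn:EJ;
  destruct (s (true, true)) as [[|] [|]] eqn:EK; try congruence.
  all: try (
  first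
  [ rtry qone EI EJ EK H0
  | rtry (Q 1 0 0 1) EI EJ EK H0
  | rtry (Q 1 1 0 0) EI EJ EK H0
  | rtry (Q 1 0 1 0) EI EJ EK H0
  | rtry (Q 1 1 1 1) EI EJ EK H0
  | rtry (Q 1 (-1) (-1) (-1)) EI EJ EK H0 ]).


Qed.


Lemma Rn_eqv v : meq (Rn (eqv v)) (embQ v).
Proof. eapply meq_trans; [apply Rn_unit, qN_eqv|apply embQ_Rq]. Qed.

Lemma rm_Hom n b : in_HomSO3 n (rightMap n b).
Proof.
  apply (Hom_of_quat n (fun k => eqv (b k))).
  - intro k; rewrite qN_eqv; intro; lra.
  - intros; apply qpm_eqv.
  - intro k; apply Rn_eqv.
Qed.

Lemma triv_Hom n : in_HomSO3 n (trivHom n).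
Proof.
  apply (Hom_of_quat n (fun _ => qone)).
  - intro k; unfold qN, qone; cbn [qw qx qy qz]; intro; lra.
  - intros; left; reflexivity.
  - intro k; eapply meq_trans; [apply Rn_unit; unfold qN, qone; cbn [qw qx qy qz]; ring|apply Rq_one].
Qed.

Lemma rm_orbit n b b' : sigma_orbit n b b' -> path_conn n (rightMap n b) (rightMap n b').
Proof.
  intros [s [Hs Hb]].
  destruct (sigma_quat s Hs) as [r [Hr Hv]].
  apply (path_of_quat n (fun t k => rot (lin r t) (eqv (b k)))).
  - intro m; unfold rot, lin, qmul, qconj; cbn [qw qx qy qz]; cont.
  - intro m; unfold rot, lin, qmul, qconj; cbn [qw qx qy qz]; cont.
  - intro m; unfold rot, lin, qmul, qconj; cbn [qw qx qy qz]; cont.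
  - intro m; unfold rot, lin, qmul, qconj; cbn [qw qx qy qz]; cont.
  - intros t m. rewrite qN_rot, qN_eqv. pose proof (lin_nz1 r Hr t). intro E; apply H; nra.
  - intros t _ m m'. apply qpm_rot, qpm_eqv.
  - intro m. rewrite lin0, rot_one. apply Rn_eqv.
  - intro m. rewrite lin1. unfold rightMap. rewrite Hb. apply Hv.
Qed.

Lemma square n a : path_conn n (rightMap n (topMap n a)) (trivHom n).
Proof.
  apply (case1 n (fun k => eqv (incl (a k)))).
  - intro k; split; [apply qN_eqv|]. destruct (a k); unfold incl, eqv, qone, qJ; cbn [qw]; lra.
  - intros k l; destruct (a k), (a l); reflexivity || (apply quat_eq; unfold incl, eqv, qmul, qone, qJ; cbn [qw qx qy qz]; ring).
  - intro k; apply embQ_Rq.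
Qed.


Definition Erel (n : nat) := clos_refl_sym_trans _ (path_conn n).

Lemma E_inv n x y k l : Erel n x y -> (Fm (x k) (x l) < -5/2 <-> Fm (y k) (y l) < -5/2).
Proof.
  induction 1.
  - apply inv_path; auto.
  - tauto.
  - tauto.
  - tauto.
Qed.

Lemma E_pat n b b' : Erel n (rightMap n b) (rightMap n b') ->
  forall k l, indb (b k) (b l) = indb (b' k) (b' l).
Proof.
  intros H k l. pose proof (E_inv n _ _ k l H) as I.
  unfold rightMap in I. rewrite !Fm_embQ in I.
  apply Bool.eq_true_iff_eq; exact I.
Qed.

Lemma E_pat_triv n b : Erel n (rightMap n b) (trivHom n) -> forall k l, indb (b k) (b l) = false.
Proof.
  intros H k l. pose proof (E_inv n _ _ k l H) as I.
  unfold rightMap, trivHom in I. rewrite Fm_embQ, Fm_mid in I.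
  destruct (indb (b k) (b l)); auto. exfalso; destruct I as [I _]; specialize (I eq_refl); lra.
Qed.

Section Univ.
Variables (n : nat) (Z : Type) (g : (Fin.t n -> V) -> Z) (z : Z).
Hypothesis Hg : forall b b', sigma_orbit n b b' -> g b = g b'.
Hypothesis Hz : forall a, g (topMap n a) = z.

Lemma nonsurj_g b : (forall k l, indb (b k) (b l) = false) -> g b = z.
Proof.
  intro H.
  destruct (classic (exists m, b m <> V0)) as [[m Hm]|Hn].
  - set (v := b m) in *.
    assert (E : (fun k => sw v (b k)) = topMap n (fun k => fst (sw v (b k)))).
    { apply functional_extensionality; intro k; unfold topMap. apply sw_val; auto. apply H. }
    rewrite (Hg b (fun k => sw v (b k))).
    + rewrite E; apply Hz.
    + exists (sw v); split; [apply sw_sigma; auto|reflexivity].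
  - assert (E : b = topMap n (fun _ => false)).
    { apply functional_extensionality; intro k; unfold topMap, incl.
      destruct (classic (b k = V0)) as [E|E]; [exact E|exfalso; apply Hn; exists k; auto]. }
    rewrite E; apply Hz.
Qed.

Lemma K1 b b' : Erel n (rightMap n b) (rightMap n b') -> g b = g b'.
Proof.
  intro H. pose proof (E_pat n b b' H) as P.
  destruct (classic (exists k l, indb (b k) (b l) = true)) as [[k [l Hkl]]|Hn].
  - apply Hg. exists (sfun (b k) (b l) (b' k) (b' l)).
    assert (Hkl' : indb (b' k) (b' l) = true) by (rewrite <- P; auto).
    split; [split|].
    + apply sfun_inj; auto.
    + apply sfun_0; auto.
    + intro m. apply sfun_val; auto.
  - assert (F : forall k l, indb (b k) (b l) = false).
    { intros k l; destruct (indb (b k) (b l)) eqn:E; auto. exfalso; apply Hn; eauto. }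
    rewrite !nonsurj_g; auto. intros k l; rewrite <- P; auto.
Qed.

Lemma K2 b : Erel n (rightMap n b) (trivHom n) -> g b = z.
Proof. intro H; apply nonsurj_g, (E_pat_triv n b H). Qed.

Definition hfun (x : Fin.t n -> Mat) : Z :=
  match excluded_middle_informative (exists b, Erel n x (rightMap n b)) with
  | left H => g (proj1_sig (constructive_indefinite_description _ H))
  | right _ => z
  end.

Lemma hspec x b : Erel n x (rightMap n b) -> hfun x = g b.
Proof.
  intro H. unfold hfun. destruct excluded_middle_informative as [e|e]; [|exfalso; apply e; eauto].
  destruct (constructive_indefinite_description _ e) as [b' Hb']; simpl.
  apply K1. eapply rst_trans; [apply rst_sym; exact Hb'|exact H].
Qed.

Lemma hspec2 x : Erel n x (trivHom n) -> hfun x = z.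
Proof.
  intro H. unfold hfun. destruct excluded_middle_informative as [e|e]; auto.
  destruct (constructive_indefinite_description _ e) as [b' Hb']; simpl.
  apply K2. eapply rst_trans; [apply rst_sym; exact Hb'|exact H].
Qed.

Lemma hnone x : ~ (exists b, Erel n x (rightMap n b)) -> hfun x = z.
Proof. intro H. unfold hfun. destruct excluded_middle_informative as [e|e]; [contradiction|auto]. Qed.

Lemma hconst x y : path_conn n x y -> hfun x = hfun y.
Proof.
  intro H.
  destruct (classic (exists b, Erel n x (rightMap n b))) as [[b Hb]|Hn].
  - rewrite (hspec x b Hb). symmetry; apply hspec.
    eapply rst_trans; [apply rst_sym, rst_step, H|exact Hb].
  - rewrite (hnone x Hn). symmetry; apply hnone.
    intros [b Hb]; apply Hn; exists b. eapply rst_trans; [apply rst_step, H|exact Hb].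
Qed.
End Univ.

Lemma const_E n (Z : Type) (h' : (Fin.t n -> Mat) -> Z) :
  (forall x y, path_conn n x y -> h' x = h' y) -> forall x y, Erel n x y -> h' x = h' y.
Proof. intros H x y E; induction E; auto; congruence. Qed.

Theorem mainTheorem8 (n : nat) :
  (* right map lands in Hom(Z^n,SO(3)) and is well defined on Sigma_3-orbits *)
  (forall b, in_HomSO3 n (rightMap n b)) /\
  (forall b b', sigma_orbit n b b' -> path_conn n (rightMap n b) (rightMap n b')) /\
  (* the trivial homomorphism is a point of Hom(Z^n,SO(3)) *)
  in_HomSO3 n (trivHom n) /\
  (* commutativity of the square *)
  (forall a, path_conn n (rightMap n (topMap n a)) (trivHom n)) /\
  (* universal property of the push-out *)
  (forall (Z : Type) (g : (Fin.t n -> V) -> Z) (z : Z),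
     (forall b b', sigma_orbit n b b' -> g b = g b') ->
     (forall a, g (topMap n a) = z) ->
     exists h : (Fin.t n -> Mat) -> Z,
       (forall x y, path_conn n x y -> h x = h y) /\
       (forall b, h (rightMap n b) = g b) /\
       h (trivHom n) = z /\
       (forall h' : (Fin.t n -> Mat) -> Z,
          (forall x y, path_conn n x y -> h' x = h' y) ->
          (forall b, h' (rightMap n b) = g b) ->
          h' (trivHom n) = z ->
          forall x, in_HomSO3 n x -> h' x = h x)).
Proof.
  split; [apply rm_Hom|]. split; [apply rm_orbit|]. split; [apply triv_Hom|].
  split; [apply square|].
  intros Z g z Hg Hz.
  exists (hfun n Z g z).
  split; [intros; apply hconst; auto|].
  split; [intro b; apply (hspec n Z g z Hg Hz); apply rst_refl|].
  split; [apply (hspec2 n Z g z Hg Hz); apply rst_refl|].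
  intros h' H1 H2 H3 x Hx.
  destruct (classify n x Hx) as [P|[b P]].
  - rewrite (H1 _ _ P), H3. symmetry; apply (hspec2 n Z g z Hg Hz); apply rst_step, P.
  - rewrite (H1 _ _ P), H2. symmetry; apply (hspec n Z g z Hg Hz); apply rst_step, P.
Qed.
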